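(* Let $(D_n)_{n\geq1}$ be a sequence of non-empty finite sets of non-negative real numbers. Let $\ell_n=\min D_n$, $u_n=\max D_n$, $\Delta_n=u_n-\ell_n$, and let $\delta_n$ be the largest gap between consecutive elements of $D_n$ (with $\delta_n=0$ if $|D_n|=1$). Suppose $(u_n)$ is bounded, $\beta>1$, and for every $n\geq1$, $$\delta_n\leq\sum_{i=1}^{\infty}\Delta_{n+i}\,\beta^{-i}.$$ Then $$\Big\{\sum_{n=1}^\infty a_n\beta^{-n} : a_n\in D_n \text{ for all } n\Big\}=\Big[\sum_{n=1}^\infty \ell_n\beta^{-n},\ \sum_{n=1}^\infty u_n\beta^{-n}\Big].$$ *)

(* Defs.v *)
From HB Require Import structures.
From mathcomp Require Import all_boot all_order all_algebra.
From mathcomp Require Import all_classical all_reals all_analysis.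
Set Implicit Arguments. Unset Strict Implicit. Unset Printing Implicit Defensive.
Import Order.TTheory GRing.Theory Num.Theory.
Local Open Scope classical_set_scope.
Local Open Scope ring_scope.

(* sum_{i >= 1} a_i, defined as the limit of the partial sums
   sum_{1 <= i < N} a_i (all series in the statement converge). *)
Definition series1 {R : realType} (a : nat -> R) : R :=
  limn (fun N => \sum_(1 <= i < N) a i).

(* For a finite nonempty set A : min A = inf A, max A = sup A. *)
Definition setmin {R : realType} (A : set R) : R := inf A.
Definition setmax {R : realType} (A : set R) : R := sup A.

(* Largest gap between consecutive elements of A (0 if A has one element):
   the largest y - x with x < y both in A and no element of A strictly
   between them; 0 is included so the value is 0 when there are no gaps. *)
Definition maxgap {R : realType} (A : set R) : R :=
  sup ([set 0] `|` [set d | exists x y, A x /\ A y /\ x < y /\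
          (forall z, A z -> z <= x \/ y <= z) /\ d = y - x]).

(* Main.v *)
Require Import Defs.
From HB Require Import structures.
From mathcomp Require Import all_boot all_order all_algebra.
From mathcomp Require Import all_classical all_reals all_analysis.
From mathcomp Require Import ring lra.
Import Order.TTheory GRing.Theory Num.Theory.
Import numFieldNormedType.Exports.
Set Implicit Arguments. Unset Strict Implicit. Unset Printing Implicit Defensive.
Local Open Scope classical_set_scope.
Local Open Scope ring_scope.
Section Fin.
Variable R : realType.

Lemma finmax (A : set R) : finite_set A -> A !=set0 ->
  exists m, A m /\ forall x, A x -> x <= m.
Proof.
move=> /finite_seqP[s ->]; elim: s => [|a s IH] [x /= hx]; first by [].
have [[y] /= hy|] := pselect ([set` s] !=set0).
  have [m [hm hmax]] := IH (ex_intro _ y hy).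
  exists (Order.max a m); split.
    by rewrite /= in_cons; case: leP => _; rewrite ?eqxx ?hm ?orbT.
  move=> z /=; rewrite in_cons => /orP[/eqP->|hz]; first by rewrite le_max lexx.
  by rewrite le_max (hmax z hz) orbT.
move=> hn; exists a; split; first by rewrite /= in_cons eqxx.
move=> z /=; rewrite in_cons => /orP[/eqP->//|hz].
by exfalso; apply: hn; exists z.
Qed.

Lemma finmin (A : set R) : finite_set A -> A !=set0 ->
  exists m, A m /\ forall x, A x -> m <= x.
Proof.
move=> /finite_seqP[s ->]; elim: s => [|a s IH] [x /= hx]; first by [].
have [[y] /= hy|] := pselect ([set` s] !=set0).
  have [m [hm hmax]] := IH (ex_intro _ y hy).
  exists (Order.min a m); split.
    by rewrite /= in_cons; case: leP => _; rewrite ?eqxx ?hm ?orbT.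
  move=> z /=; rewrite in_cons => /orP[/eqP->|hz]; first by rewrite ge_min lexx.
  by rewrite ge_min (hmax z hz) orbT.
move=> hn; exists a; split; first by rewrite /= in_cons eqxx.
move=> z /=; rewrite in_cons => /orP[/eqP->//|hz].
by exfalso; apply: hn; exists z.
Qed.

Lemma sup_eqmax (A : set R) m : A m -> (forall x, A x -> x <= m) -> sup A = m.
Proof.
move=> hm hmax; apply/le_anti/andP; split.
  by apply: ge_sup; [exists m | move=> x /hmax].
have hub : has_ubound A by exists m => x /hmax.
exact: (ub_le_sup hub).
Qed.

Lemma inf_eqmin (A : set R) m : A m -> (forall x, A x -> m <= x) -> inf A = m.
Proof.
move=> hm hmin; apply/le_anti/andP; split; last first.
  by apply: lb_le_inf; [exists m | move=> x /hmin].
have hlb : has_lbound A by exists m => x /hmin.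
exact: (ge_inf hlb).
Qed.

End Fin.
Section Ser.
Variable R : realType.
Variable beta : R.
Hypothesis hb : 1 < beta.

Let b0 : 0 < beta. Proof. exact: lt_trans hb. Qed.
Let bn0 : beta != 0. Proof. by rewrite gt_eqF. Qed.

Definition ps (c : nat -> R) N := \sum_(1 <= i < N) c i / beta ^+ i.

Lemma geo_eq N : (beta - 1) * \sum_(1 <= i < N.+1) 1 / beta ^+ i = 1 - 1 / beta ^+ N.
Proof.
elim: N => [|N IH]; first by rewrite big_geq // mulr0 expr0 divr1 subrr.
rewrite big_nat_recr //= mulrDr IH exprS.
have hN : beta ^+ N != 0 by rewrite expf_neq0.
field; by rewrite hN bn0.
Qed.

Lemma geo_le N : \sum_(1 <= i < N) 1 / beta ^+ i <= 1 / (beta - 1).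
Proof.
have hb1 : 0 < beta - 1 by rewrite subr_gt0.
case: N => [|N]; first by rewrite big_geq // divr_ge0 // ltW.
rewrite ler_pdivlMr // mulrC geo_eq lerBlDr lerDl divr_ge0 // exprn_ge0 // ltW.
all: by [].
Qed.

Lemma ps_bound c M N : (forall i, (1 <= i)%N -> 0 <= c i <= M) ->
  0 <= ps c N <= M / (beta - 1).
Proof.
move=> hc; apply/andP; split.
  rewrite /ps big_nat_cond sumr_ge0 // => i /andP[/andP[hi _] _].
  by have /andP[h _] := hc i hi; rewrite divr_ge0 // exprn_ge0 // ltW.
apply: (le_trans (y := M * \sum_(1 <= i < N) 1 / beta ^+ i)).
  rewrite mulr_sumr ler_sum_nat // => i /andP[hi _].
  have /andP[_ h] := hc i hi; rewrite mul1r ler_pM2r // invr_gt0 exprn_gt0 //.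
have M0 : 0 <= M by have /andP[h1 h2] := hc 1%N isT; exact: le_trans h2.
have -> : M / (beta - 1) = M * (1 / (beta - 1)) by rewrite mul1r.
by rewrite ler_wpM2l // geo_le.
Qed.

Lemma ps_nd c M : (forall i, (1 <= i)%N -> 0 <= c i <= M) ->
  {homo ps c : n m / (n <= m)%N >-> n <= m}.
Proof.
move=> hc; apply/nondecreasing_seqP => n; rewrite /ps.
case: n => [|n]; first by rewrite !big_geq.
rewrite [X in _ <= X]big_nat_recr //= lerDl.
by have /andP[h _] := hc n.+1 isT; rewrite divr_ge0 // exprn_ge0 // ltW.
Qed.

Lemma ps_cvg c M : (forall i, (1 <= i)%N -> 0 <= c i <= M) -> cvgn (ps c).
Proof.
move=> hc; apply: nondecreasing_is_cvgn; first exact: ps_nd hc.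
exists (M / (beta - 1)) => _ [N _ <-].
by have /andP[] := @ps_bound c M N hc.
Qed.

Lemma ps_lim_bound c M : (forall i, (1 <= i)%N -> 0 <= c i <= M) ->
  0 <= limn (ps c) <= M / (beta - 1).
Proof.
move=> hc; have hcv := ps_cvg hc; apply/andP; split.
  by apply: limr_ge => //; apply: nearW => N; have /andP[] := @ps_bound c M N hc.
by apply: limr_le => //; apply: nearW => N; have /andP[] := @ps_bound c M N hc.
Qed.

Lemma limS (u : R^nat) : cvgn u -> limn (fun n => u n.+1) = limn u.
Proof. by move=> hu; apply: (@cvg_lim _ (@Rhausdorff R)); rewrite cvg_shiftS. Qed.


Lemma ps_shift c N : ps c N.+2 = (c 1%N + ps (fun i => c (1 + i)%N) N.+1) / beta.
Proof.
rewrite /ps big_nat_recl // expr1 mulrDl; congr (_ + _).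
rewrite mulr_suml; apply: eq_bigr => i _.
have hi : beta ^+ i != 0 by rewrite expf_neq0.
rewrite add1n exprS; field; by rewrite hi bn0.
Qed.

Lemma series_shift c M : (forall i, (1 <= i)%N -> 0 <= c i <= M) ->
  limn (ps c) = (c 1%N + limn (ps (fun i => c (1 + i)%N))) / beta.
Proof.
move=> hc.
have hc' : forall i, (1 <= i)%N -> 0 <= c (1 + i)%N <= M by move=> i _; exact: hc.
have cv := ps_cvg hc; have cv' := ps_cvg hc'.
have cv1 : cvgn (fun n => ps c n.+1) by apply: cvgP; rewrite cvg_shiftS; exact: cv.
transitivity (limn (fun N => ps c N.+2)).
  by rewrite (limS cv1) (limS cv).
apply: (@cvg_lim _ (@Rhausdorff R)).
rewrite (_ : (fun N => ps c N.+2) = (fun N => (c 1%N + ps (fun i => c (1 + i)%N) N.+1) / beta)); last first.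
  by apply: funext => N; rewrite ps_shift.
apply: cvgMr_tmp; apply: cvgD; first exact: cvg_cst.
by rewrite cvg_shiftS.
Qed.

Lemma series_sub c d : cvgn (ps c) -> cvgn (ps d) ->
  limn (ps (fun i => c i - d i)) = limn (ps c) - limn (ps d).
Proof.
move=> hc hd.
rewrite (_ : ps (fun i => c i - d i) = ps c - ps d); first by rewrite limB.
apply: funext => N; rewrite /ps /= !fctE -sumrB; apply: eq_bigr => i _; by rewrite mulrBl.
Qed.

End Ser.

Section Main.
Variables (R : realType) (D : nat -> set R) (beta M : R).
Hypothesis hfin : forall n, (1 <= n)%N -> finite_set (D n).
Hypothesis hne : forall n, (1 <= n)%N -> D n !=set0.
Hypothesis hpos : forall n, (1 <= n)%N -> D n `<=` [set x | 0 <= x].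
Hypothesis hM : forall n, (1 <= n)%N -> setmax (D n) <= M.
Hypothesis hb : 1 < beta.
Hypothesis hgap : forall n, (1 <= n)%N ->
     maxgap (D n) <=
       series1 (fun i => (setmax (D (n + i)%N) - setmin (D (n + i)%N)) / beta ^+ i).

Local Notation l n := (setmin (D n)).
Local Notation u n := (setmax (D n)).

Let bn0 : beta != 0. Proof. by rewrite gt_eqF // (lt_trans ltr01 hb). Qed.
Let b0 : 0 < beta. Proof. exact: (lt_trans ltr01 hb). Qed.

Lemma lP n : (1 <= n)%N -> D n (l n) /\ forall x, D n x -> l n <= x.
Proof.
move=> hn; have [m [hm hmin]] := finmin (hfin hn) (hne hn).
by rewrite /setmin (inf_eqmin hm hmin).
Qed.

Lemma uP n : (1 <= n)%N -> D n (u n) /\ forall x, D n x -> x <= u n.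
Proof.
move=> hn; have [m [hm hmax]] := finmax (hfin hn) (hne hn).
by rewrite /setmax (sup_eqmax hm hmax).
Qed.

Lemma gapP n p q : (1 <= n)%N -> p <= u n -> l n <= q -> maxgap (D n) <= q - p ->
  exists d, D n d /\ p <= d <= q.
Proof.
move=> hn hpu hlq hg.
have [lD lmin] := lP hn; have [uD umax] := uP hn.
have [a [[aD aq] amax]] := finmax (@finite_setIl _ (D n) [set d | d <= q] (hfin hn))
  (ex_intro _ (l n) (conj lD hlq)).
case: (leP p a) => hpa.
  by exists a; split => //; apply/andP; split.
have [b [[bD ab] bmin]] := finmin (@finite_setIl _ (D n) [set d | a < d] (hfin hn))
  (ex_intro _ (u n) (conj uD (lt_le_trans hpa hpu))).
have qb : q < b.
  rewrite ltNge; apply/negP => bq.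
  have := amax b (conj bD bq); by rewrite leNgt ab.
have hgp : b - a <= maxgap (D n).
  rewrite /maxgap.
  have hub : has_ubound ([set 0] `|` [set d | exists x y, D n x /\ D n y /\ x < y /\
          (forall z, D n z -> z <= x \/ y <= z) /\ d = y - x]).
    exists (u n) => z [->|[x [y [xD [yD [_ [_ ->]]]]]]].
      exact: (hpos hn uD).
    have := umax _ yD; have := hpos hn xD; rewrite /=; lra.
  apply: (ub_le_sup hub); right; exists a, b; do 4 (split => //).
  move=> z zD; case: (leP z a) => hz; [by left | right].
  by apply: bmin; split.
exfalso; lra.
Qed.

Definition Lt n := limn (ps beta (fun i => l (n + i)%N)).
Definition Ut n := limn (ps beta (fun i => u (n + i)%N)).

Lemma hcL n : forall i, (1 <= i)%N -> 0 <= l (n + i)%N <= M.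
Proof.
move=> i hi; have hni : (1 <= n + i)%N by rewrite addn_gt0 hi orbT.
have [lD _] := lP hni; have [_ umax] := uP hni.
apply/andP; split; first exact: (hpos hni lD).
exact: le_trans (umax _ lD) (hM hni).
Qed.

Lemma hcU n : forall i, (1 <= i)%N -> 0 <= u (n + i)%N <= M.
Proof.
move=> i hi; have hni : (1 <= n + i)%N by rewrite addn_gt0 hi orbT.
have [uD _] := uP hni.
apply/andP; split; first exact: (hpos hni uD).
exact: (hM hni).
Qed.

Lemma Lt_rec n : Lt n = (l n.+1 + Lt n.+1) / beta.
Proof.
rewrite /Lt (series_shift hb (hcL n)) addn1.
congr ((_ + limn (ps _ _)) / _); apply: funext => i; by rewrite addnA addn1.
Qed.

Lemma Ut_rec n : Ut n = (u n.+1 + Ut n.+1) / beta.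
Proof.
rewrite /Ut (series_shift hb (hcU n)) addn1.
congr ((_ + limn (ps _ _)) / _); apply: funext => i; by rewrite addnA addn1.
Qed.

Lemma Lt_bnd n : 0 <= Lt n <= M / (beta - 1).
Proof. rewrite /Lt; exact: (ps_lim_bound hb (hcL n)). Qed.

Lemma Ut_bnd n : 0 <= Ut n <= M / (beta - 1).
Proof. rewrite /Ut; exact: (ps_lim_bound hb (hcU n)). Qed.

Lemma gapT n : maxgap (D n.+1) <= Ut n.+1 - Lt n.+1.
Proof.
rewrite /Ut /Lt -(series_sub (ps_cvg hb (hcU _)) (ps_cvg hb (hcL _))).
exact: hgap.
Qed.

Definition A m y := xget 0 (D m `&` [set d | beta * y - Ut m <= d <= beta * y - Lt m]).

Lemma Aok n y : Lt n <= y <= Ut n ->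
  D n.+1 (A n.+1 y) /\ beta * y - Ut n.+1 <= A n.+1 y <= beta * y - Lt n.+1.
Proof.
move=> /andP[h1 h2].
have eU : beta * Ut n = u n.+1 + Ut n.+1 by rewrite Ut_rec; field.
have eL : beta * Lt n = l n.+1 + Lt n.+1 by rewrite Lt_rec; field.
have e1 : beta * y <= beta * Ut n by rewrite ler_pM2l.
have e2 : beta * Lt n <= beta * y by rewrite ler_pM2l.
have [d [dD /andP[d1 d2]]] :
    exists d, D n.+1 d /\ beta * y - Ut n.+1 <= d <= beta * y - Lt n.+1.
  apply: gapP => //; [lra | lra | have := gapT n; lra].
have := @xgetPex _ 0 (D n.+1 `&` [set d | beta * y - Ut n.+1 <= d <= beta * y - Lt n.+1])
  (ex_intro _ d (conj dD (introT andP (conj d1 d2)))).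
by rewrite -/(A n.+1 y) => -[].
Qed.

Fixpoint yy (x : R) (n : nat) : R :=
  match n with 0 => x | S k => beta * yy x k - A (S k) (yy x k) end.

Lemma yinv x : Lt 0 <= x <= Ut 0 -> forall n, Lt n <= yy x n <= Ut n.
Proof.
move=> hx; elim => [|n IH] //=.
have [_ /andP[a1 a2]] := Aok IH.
apply/andP; split; lra.
Qed.

Definition aa x k := match k with 0 => 0 | S k' => A (S k') (yy x k') end.

Lemma aD x : Lt 0 <= x <= Ut 0 -> forall n, (1 <= n)%N -> D n (aa x n).
Proof.
move=> hx [|n] // _ /=.
by have [] := Aok (yinv hx n).
Qed.

Lemma psum x N : ps beta (aa x) N.+1 = x - yy x N / beta ^+ N.
Proof.
elim: N => [|N IH]; first by rewrite /ps big_geq // expr0 divr1 subrr.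
rewrite /ps big_nat_recr //=; rewrite /ps in IH; rewrite IH exprS.
have hN : beta ^+ N != 0 by rewrite expf_neq0.
field; by rewrite hN bn0.
Qed.

Lemma y_to0 x : Lt 0 <= x <= Ut 0 -> (fun N => yy x N / beta ^+ N) @ \oo --> 0.
Proof.
move=> hx; set B := M / (beta - 1).
apply: (@squeeze_cvgr _ _ _ _ (cst 0) (fun N => B * (beta^-1) ^+ N)).
- apply: nearW => N; have /andP[y1 y2] := yinv hx N.
  have /andP[L0 _] := Lt_bnd N; have /andP[_ UB] := Ut_bnd N.
  have hN : 0 < beta ^+ N by rewrite exprn_gt0.
  have y0 : 0 <= yy x N := le_trans L0 y1.
  apply/andP; split; first by rewrite /= divr_ge0 // ltW.
  rewrite exprVn ler_wpM2r //; first by rewrite invr_ge0 ltW.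
  exact: le_trans y2 UB.
- exact: cvg_cst.
- rewrite -[X in _ --> X](mulr0 B); apply: cvgMl_tmp; apply: cvg_expr.
  by rewrite ger0_norm ?invr_ge0 ?ltW // invf_lt1.
Qed.

Lemma ps_cvg_x x : Lt 0 <= x <= Ut 0 -> ps beta (aa x) @ \oo --> x.
Proof.
move=> hx; rewrite -cvg_shiftS.
rewrite (_ : (fun n => ps beta (aa x) n.+1) = (fun n => x - yy x n / beta ^+ n)); last first.
  by apply: funext => n; rewrite psum.
have := cvgB (cvg_cst x) (y_to0 hx); rewrite subr0; apply.
Qed.

Lemma mainlem :
  [set x | exists a : nat -> R,
      (forall n, (1 <= n)%N -> D n (a n)) /\ x = series1 (fun n => a n / beta ^+ n)]
  = `[series1 (fun n => setmin (D n) / beta ^+ n),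
      series1 (fun n => setmax (D n) / beta ^+ n)]%classic.
Proof.
apply/seteqP; split => x /=.
- move=> [a [ha ->]]; rewrite in_itv /=.
  have hla : forall i, (1 <= i)%N -> l i <= a i /\ a i <= u i.
    move=> i hi; have [_ lmin] := lP hi; have [_ umax] := uP hi.
    by split; [apply: lmin | apply: umax]; apply: ha.
  have ha' : forall i, (1 <= i)%N -> 0 <= a i <= M.
    move=> i hi; have [h1 h2] := hla i hi; apply/andP; split.
      by have := hpos hi (ha _ hi).
    exact: le_trans h2 (hM hi).
  have cva : cvgn (ps beta a) := ps_cvg hb ha'.
  have cvl : cvgn (ps beta (fun i => l (0 + i)%N)) := ps_cvg hb (hcL 0).
  have cvu : cvgn (ps beta (fun i => u (0 + i)%N)) := ps_cvg hb (hcU 0).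
  rewrite /series1; apply/andP; split.
    apply: ler_lim => //; apply: nearW => N; apply: ler_sum_nat => i /andP[hi _].
    have [h1 _] := hla i hi.
    by rewrite ler_wpM2r // invr_ge0 exprn_ge0 // ltW.
  apply: ler_lim => //; apply: nearW => N; apply: ler_sum_nat => i /andP[hi _].
  have [_ h2] := hla i hi.
  by rewrite ler_wpM2r // invr_ge0 exprn_ge0 // ltW.
- rewrite in_itv /= => /andP[h1 h2].
  have hx : Lt 0 <= x <= Ut 0 by apply/andP; split.
  exists (aa x); split; first exact: aD hx.
  rewrite /series1; apply/esym; apply: (@cvg_lim _ (@Rhausdorff R)).
  exact: ps_cvg_x.
Qed.

End Main.

Theorem lemma2p1 (R : realType) (D : nat -> set R) (beta : R) :
  (forall n, (1 <= n)%N -> finite_set (D n)) ->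
  (forall n, (1 <= n)%N -> D n !=set0) ->
  (forall n, (1 <= n)%N -> D n `<=` [set x | 0 <= x]) ->
  (exists M : R, forall n, (1 <= n)%N -> setmax (D n) <= M) ->
  1 < beta ->
  (forall n, (1 <= n)%N ->
     maxgap (D n) <=
       series1 (fun i => (setmax (D (n + i)%N) - setmin (D (n + i)%N)) / beta ^+ i)) ->
  [set x | exists a : nat -> R,
      (forall n, (1 <= n)%N -> D n (a n)) /\ x = series1 (fun n => a n / beta ^+ n)]
  = `[series1 (fun n => setmin (D n) / beta ^+ n),
      series1 (fun n => setmax (D n) / beta ^+ n)]%classic.
Proof.
move=> hfin hne hpos [M hM] hb hgap.
exact: (@mainlem R D beta M hfin hne hpos hM hb hgap).
Qed.
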